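(* Consider the setting described in the context (decentralized affine nonlinear system, loop $j$, controller $K_{i,j}$ with $A_{jj}-B_{jj}K_{i,j}$ Hurwitz, sample times $t_0<\dots<t_l$, data trajectories, and a block-diagonal state transformation $S=\mathrm{diag}(S_1,\dots,S_N)$ with $S_j\in\mathrm{GL}(n_j)$). Let $\mathbf{A}_{i,j},\mathbf{b}_{i,j}$ be the dEIRL regression matrix and vector and $\tilde{\mathbf{A}}_{i,j},\tilde{\mathbf{b}}_{i,j}$ the MEE (modulated) regression matrix and vector. Then $P_{i,j}\in\mathbb{S}^{n_j}$, $P_{i,j}>0$, satisfies the dEIRL regression $\mathbf{A}_{i,j}\operatorname{svec}(P_{i,j})=\mathbf{b}_{i,j}$ if and only if $\tilde P_{i,j}=S_j^{-T}P_{i,j}S_j^{-1}$ satisfies the MEE regression $\tilde{\mathbf{A}}_{i,j}\operatorname{svec}(\tilde P_{i,j})=\tilde{\mathbf{b}}_{i,j}$. Furthermore, $$\tilde{\mathbf{A}}_{i,j}=\mathbf{A}_{i,j}(S_j\,\underline{\otimes}\, S_j)^T,\qquad \tilde{\mathbf{b}}_{i,j}=\mathbf{b}_{i,j}.$$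
   Context: Symmetric Kronecker algebra: for $k\in\mathbb{N}$ let $\underline{k}=k(k+1)/2$, $\mathbb{S}^k$ the real symmetric $k\times k$ matrices, $\operatorname{vec}$ column-stacking, $\otimes$ the Kronecker product, $e_1,\dots,e_k$ the standard basis. Enumerate pairs $(r,c)$, $1\le r\le c\le k$, in the order $(1,1),\dots,(1,k),(2,2),\dots,(2,k),\dots,(k,k)$ as $(r(\ell),c(\ell))$; set $E_\ell=e_{r(\ell)}e_{r(\ell)}^T$ if $r(\ell)=c(\ell)$, $E_\ell=\frac{\sqrt2}{2}(e_{r(\ell)}e_{c(\ell)}^T+e_{c(\ell)}e_{r(\ell)}^T)$ otherwise; $W_k\in\mathbb{R}^{\underline{k}\times k^2}$ has $\ell$-th row $\operatorname{vec}(E_\ell)^T$. For $A,B\in\mathbb{R}^{p\times q}$, $A\,\underline{\otimes}\, B = W_p(A\otimes B)W_q^T$ (for row vectors $a^T,b^T$, $a,b\in\mathbb{R}^q$: $a^T\,\underline{\otimes}\, b^T=(a\otimes b)^TW_q^T$). $\operatorname{svec}(P)=W_k\operatorname{vec}(P)$ for $P\in\mathbb{S}^k$. For $t_0<\dots<t_l$ and $x,y:[t_0,t_l]\to\mathbb{R}^k$: $\delta_{x,y}\in\mathbb{R}^{l\times\underline{k}}$ has $k'$-th row $(x(t_{k'})+y(t_{k'-1}))^T\,\underline{\otimes}\,(x(t_{k'})-y(t_{k'-1}))^T$, and for square-integrable $x,y$, $I_{x,y}\in\mathbb{R}^{l\times\underline{k}}$ has $k'$-th row $\int_{t_{k'-1}}^{t_{k'}}x^T\,\underline{\otimes}\,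 y^T\,d\tau$. System: $\dot x=f(x)+g(x)u$, $x\in\mathbb{R}^n$, $u\in\mathbb{R}^m$, with $f(0)=0$, $f,g$ Lipschitz on a compact set containing the origin in its interior, and state partitioned into $N$ loops $x=(x_1,\dots,x_N)$, $x_j\in\mathbb{R}^{n_j}$, $u=(u_1,\dots,u_N)$, $u_j\in\mathbb{R}^{m_j}$, so that $\dot x_j=f_j(x)+g_j(x)u$ with $g_j(x)\in\mathbb{R}^{n_j\times m}$. $(A,B)$ is the linearization at $0$, with diagonal blocks $A_{jj}\in\mathbb{R}^{n_j\times n_j}$, $B_{jj}\in\mathbb{R}^{n_j\times m_j}$. Cost matrices $Q_j\in\mathbb{S}^{n_j}$, $Q_j\ge0$, $R_j\in\mathbb{S}^{m_j}$, $R_j>0$. Fix loop $j$ and $K_{i,j}\in\mathbb{R}^{m_j\times n_j}$ with $A_{jj}-B_{jj}K_{i,j}$ Hurwitz, and put $Q_{i,j}=Q_j+K_{i,j}^TR_jK_{i,j}$. Let $x(\cdot),u(\cdot)$ be a (square-integrable) state-input trajectory on $[t_0,t_l]$ and $w_j=f_j(x)-A_{jj}x_j$. The dEIRL regression is $\mathbf{A}_{i,j}=\delta_{x_j,x_j}-2\big[I_{x_j,x_j}(I_{n_j}\,\underline{\otimes}\, B_{jj}K_{i,j})^T+I_{x_j,g_j(x)u}+I_{x_j,w_j}\big]\in\mathbb{R}^{l\times\underline{n}_j}$, $\mathbf{b}_{i,j}=-I_{x_j,x_j}\operatorname{svec}(Q_{i,j})$. Modulation: $S=\mathrm{diag}(S_1,\dots,S_N)$,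 $S_j\in\mathrm{GL}(n_j)$, $\tilde x=Sx$, $\tilde x_j=S_jx_j$; $\tilde f_j=S_j\circ f_j\circ S^{-1}$, $\tilde g_j=S_j\circ g_j\circ S^{-1}$, $\tilde A_{jj}=S_jA_{jj}S_j^{-1}$, $\tilde B_{jj}=S_jB_{jj}$, $\tilde Q_j=S_j^{-T}Q_jS_j^{-1}$, $\tilde K_{i,j}=K_{i,j}S_j^{-1}$, $\tilde Q_{i,j}=\tilde Q_j+\tilde K_{i,j}^TR_j\tilde K_{i,j}$, $\tilde w_j=\tilde f_j(\tilde x)-\tilde A_{jj}\tilde x_j$. The MEE regression $(\tilde{\mathbf{A}}_{i,j},\tilde{\mathbf{b}}_{i,j})$ is defined by the same formulas as $(\mathbf{A}_{i,j},\mathbf{b}_{i,j})$ with every quantity replaced by its tilded counterpart (data $\tilde x_j$, $\tilde g_j(\tilde x)u$, $\tilde w_j$, $\tilde B_{jj}\tilde K_{i,j}$, $\tilde Q_{i,j}$). *)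

(* Defs.v *)
From HB Require Import structures.
From mathcomp Require Import all_boot all_order all_algebra.
From mathcomp Require Import all_classical all_reals all_analysis.
From mathcomp Require Import mxtens complex.

Set Implicit Arguments.
Unset Strict Implicit.
Unset Printing Implicit Defensive.

Import Order.TTheory GRing.Theory Num.Theory.
Import numFieldNormedType.Exports.
Local Open Scope ring_scope.

Section SymKron.
Variable R : realType.

Definition tri (k : nat) : nat := (k * k.+1)./2.

(* 0-based position of the pair (r,c), r <= c, in the enumeration
   (0,0),...,(0,k-1),(1,1),...,(1,k-1),...,(k-1,k-1). *)
Definition tri_index (k r c : nat) : nat := (\sum_(s < r) (k - s) + (c - r))%N.

Definition pair_of (k : nat) (l : 'I_(tri k)) : option ('I_k * 'I_k) :=
  [pick rc : 'I_k * 'I_k | (rc.1 <= rc.2)%N && (tri_index k rc.1 rc.2 == l)].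

Definition Emx (k : nat) (l : 'I_(tri k)) : 'M[R]_k :=
  match pair_of l with
  | Some rc => if rc.1 == rc.2 then delta_mx rc.1 rc.1
               else (Num.sqrt 2 / 2) *: (delta_mx rc.1 rc.2 + delta_mx rc.2 rc.1)
  | None => 0
  end.

(* column-stacking vec : entry at position j*p + i is A i j *)
Definition vecmx (p q : nat) (A : 'M[R]_(p, q)) : 'cV[R]_(q * p) :=
  \col_s A (mxtens_unindex s).2 (mxtens_unindex s).1.

Definition Wmx (k : nat) : 'M[R]_(tri k, k * k) :=
  \matrix_(l < tri k) (vecmx (Emx l))^T.

Definition skron (p q : nat) (A B : 'M[R]_(p, q)) : 'M[R]_(tri p, tri q) :=
  Wmx p *m (A *t B) *m (Wmx q)^T.

(* a^T (x)_s b^T = (a (x) b)^T W_q^T *)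
Definition skron_row (q : nat) (a b : 'cV[R]_q) : 'rV[R]_(tri q) :=
  (a *t b)^T *m (Wmx q)^T.

Definition svec (k : nat) (P : 'M[R]_k) : 'cV[R]_(tri k) := Wmx k *m vecmx P.

Definition tprev (l : nat) (t : 'I_l.+1 -> R) (r : 'I_l) : R := t (widen_ord (leqnSn l) r).
Definition tnext (l : nat) (t : 'I_l.+1 -> R) (r : 'I_l) : R := t (lift ord0 r).

Definition deltamx (l k : nat) (t : 'I_l.+1 -> R) (x y : R -> 'cV[R]_k)
  : 'M[R]_(l, tri k) :=
  \matrix_(r < l) skron_row (x (tnext t r) + y (tprev t r)) (x (tnext t r) - y (tprev t r)).

Definition Iint (l k : nat) (t : 'I_l.+1 -> R) (x y : R -> 'cV[R]_k)
  : 'M[R]_(l, tri k) :=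
  \matrix_(r, c) Rintegral lebesgue_measure `[tprev t r, tnext t r]%classic
                   (fun tau => skron_row (x tau) (y tau) 0 c).

Definition dEIRL_A (l k : nat) (t : 'I_l.+1 -> R) (xj gu w : R -> 'cV[R]_k)
  (BK : 'M[R]_k) : 'M[R]_(l, tri k) :=
  deltamx t xj xj
  - 2 *: (Iint t xj xj *m (skron 1%:M BK)^T + Iint t xj gu + Iint t xj w).

Definition dEIRL_b (l k : nat) (t : 'I_l.+1 -> R) (xj : R -> 'cV[R]_k)
  (Qi : 'M[R]_k) : 'cV[R]_l :=
  - (Iint t xj xj *m svec Qi).

Definition symmx (k : nat) (P : 'M[R]_k) : Prop := P^T = P.
Definition posdef (k : nat) (P : 'M[R]_k) : Prop :=
  symmx P /\ forall v : 'cV[R]_k, v != 0 -> 0 < (v^T *m P *m v) 0 0.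
Definition psd (k : nat) (P : 'M[R]_k) : Prop :=
  symmx P /\ forall v : 'cV[R]_k, 0 <= (v^T *m P *m v) 0 0.

Definition hurwitz (k : nat) (M : 'M[R]_k) : Prop :=
  forall z : R[i], eigenvalue (map_mx (fun r : R => (r%:C)%C) M) z -> Re z < 0.

Definition sq_int (k : nat) (a b : R) (h : R -> 'cV[R]_k) : Prop :=
  forall i : 'I_k,
    measurable_fun `[a, b]%classic (fun tau => h tau i 0) /\
    lebesgue_measure.-integrable `[a, b]%classic (fun tau => ((h tau i 0) ^+ 2)%:E).

End SymKron.

(* Main.v *)
Require Import Defs.
From HB Require Import structures.
From mathcomp Require Import all_boot all_order all_algebra.
From mathcomp Require Import all_classical all_reals all_analysis.
From mathcomp Require Import mxtens complex.
From mathcomp Require Import zify ring lra.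
Import Order.TTheory GRing.Theory Num.Theory.
Import numFieldNormedType.Exports.
Local Open Scope classical_set_scope.
Local Open Scope ring_scope.


Definition Tsum (k r : nat) : nat := (\sum_(s < r) (k - s))%N.

Lemma Tsum_rec k r : Tsum k r.+1 = (Tsum k r + (k - r))%N.
Proof. by rewrite /Tsum big_ord_recr. Qed.

Lemma Tsum_mono k a b : (a <= b)%N -> (Tsum k a <= Tsum k b)%N.
Proof.
elim: b => [|b IH]; first by rewrite leqn0 => /eqP ->.
rewrite leq_eqVlt => /orP[/eqP -> //|]; rewrite ltnS => /IH h.
by rewrite Tsum_rec; apply: leq_trans h (leq_addr _ _).
Qed.

Lemma Tsum_full k : (k * k.+1 = (Tsum k k).*2)%N.
Proof.
elim: k => [|k IH]; first by rewrite /Tsum big_ord0.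
have -> : Tsum k.+1 k.+1 = (k.+1 + Tsum k k)%N.
  rewrite /Tsum big_ord_recl /=; congr (_ + _)%N.
rewrite doubleD -IH; lia.
Qed.

Lemma tri_Tsum k : tri k = Tsum k k.
Proof. by rewrite /tri Tsum_full doubleK. Qed.

Lemma tri_index_T k r c : tri_index k r c = (Tsum k r + (c - r))%N.
Proof. by []. Qed.

Lemma tri_index_lt k r c : (r <= c)%N -> (c < k)%N -> (tri_index k r c < tri k)%N.
Proof.
move=> rc ck; rewrite tri_Tsum tri_index_T.
have h1 := Tsum_rec k r.
have h2 : (r.+1 <= k)%N by apply: leq_ltn_trans ck.
have h3 := @Tsum_mono k _ _ h2.
lia.
Qed.

Lemma tri_index_inj k r1 c1 r2 c2 : (r1 <= c1)%N -> (c1 < k)%N ->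
  (r2 <= c2)%N -> (c2 < k)%N -> tri_index k r1 c1 = tri_index k r2 c2 ->
  r1 = r2 /\ c1 = c2.
Proof.
move=> h1 h2 h3 h4; rewrite !tri_index_T => e.
have key : forall a b ca cb, (a < b)%N -> (a <= ca)%N -> (ca < k)%N ->
   (Tsum k a + (ca - a) < Tsum k b + (cb - b))%N.
  move=> a b ca cb ab h5 h6.
  have := Tsum_rec k a; have := @Tsum_mono k _ _ ab; lia.
case: (ltngtP r1 r2) => [lt|lt|eq].
- by have := key _ _ _ c2 lt h1 h2; lia.
- by have := key _ _ _ c1 lt h3 h4; lia.
- subst; split => //; lia.
Qed.

Section Pairs.
Variable R : realType.
Variable k : nat.

Lemma pair_ofP (l : 'I_(tri k)) (rc : 'I_k * 'I_k) :
  (pair_of l == Some rc) = ((rc.1 <= rc.2)%N && (tri_index k rc.1 rc.2 == l)).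
Proof.
rewrite /pair_of; case: pickP => [rc' /andP[h1 /eqP h2]|H].
  apply/eqP/andP => [[<-]|[h3 /eqP h4]]; first by rewrite h1 h2.
  have [e1 e2] := @tri_index_inj k _ _ _ _ h1 (ltn_ord _) h3 (ltn_ord _) (etrans h2 (esym h4)).
  by congr Some; case: rc' e1 e2 {h1 h2} => a b; case: rc h3 h4 => a' b' /= _ _ e1 e2;
    congr pair; apply: val_inj.
by have := H rc => /= ->.
Qed.

Lemma sum_pairs (G : option ('I_k * 'I_k) -> R) : G None = 0 ->
  \sum_(l < tri k) G (pair_of l) = \sum_(rc : 'I_k * 'I_k | (rc.1 <= rc.2)%N) G (Some rc).
Proof.
move=> G0.
transitivity (\sum_(l < tri k) \sum_(rc : 'I_k * 'I_k | (rc.1 <= rc.2)%N && (tri_index k rc.1 rc.2 == l)) G (Some rc)).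
  apply: eq_bigr => l _.
  case E: (pair_of l) => [rc|].
    rewrite (big_pred1 rc) // => rc'; rewrite -pair_ofP E.
    by apply/eqP/eqP => [[->]|->].
  rewrite big_pred0 // => rc'; rewrite -pair_ofP E //.
rewrite (exchange_big_dep (fun rc : 'I_k * 'I_k => (rc.1 <= rc.2)%N)) /=; last by move=> i j _ /andP[].
apply: eq_bigr => rc hrc.
rewrite (big_pred1 (Ordinal (@tri_index_lt k _ _ hrc (ltn_ord rc.2)))) //.
by move=> l; rewrite hrc /= -val_eqE /= eq_sym.
Qed.

End Pairs.

Section F3.
Variable R : realType.
Variable k : nat.

Definition Eo (o : option ('I_k * 'I_k)) : 'M[R]_k :=
  match o with
  | Some rc => if rc.1 == rc.2 then delta_mx rc.1 rc.1
               else (Num.sqrt 2 / 2) *: (delta_mx rc.1 rc.2 + delta_mx rc.2 rc.1)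
  | None => 0
  end.

Arguments Eo : simpl never.

Lemma EmxE (l : 'I_(tri k)) : Emx R l = Eo (pair_of l).
Proof. by []. Qed.

Lemma sqrt2h : Num.sqrt (2:R) / 2 * (Num.sqrt 2 / 2) = 2^-1.
Proof.
rewrite mulrACA -(expr2 (Num.sqrt (2:R))) sqr_sqrtr ?ler0n // -invfM.
by rewrite invfM mulrA divff ?pnatr_eq0 // mul1r.
Qed.

Lemma F3 (i1 j1 i2 j2 : 'I_k) :
  \sum_(l < tri k) Emx R l i1 j1 * Emx R l i2 j2 =
  2^-1 * (((i1 == i2) && (j1 == j2))%:R + ((i1 == j2) && (j1 == i2))%:R).
Proof.
rewrite (eq_bigr (fun l => Eo (pair_of l) i1 j1 * Eo (pair_of l) i2 j2)); last by move=> l _; rewrite EmxE.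
rewrite (@sum_pairs R k (fun o => Eo o i1 j1 * Eo o i2 j2)) /=; last by rewrite !mxE mul0r.
pose p0 : 'I_k * 'I_k := if (i1 <= j1)%N then (i1, j1) else (j1, i1).
have p0le : (p0.1 <= p0.2)%N.
  by rewrite /p0; case: (leqP i1 j1) => h //=; apply: ltnW.

have claim : forall rc : 'I_k * 'I_k, (rc.1 <= rc.2)%N -> rc != p0 ->
    Eo (Some rc) i1 j1 = 0.
{ move=> [r c] /= rc ne; rewrite /Eo /=.
  case: eqP => [erc|nrc]; rewrite !mxE.
    subst c.
    have [e1|n1] := eqVneq i1 r; have [e2|n2] := eqVneq j1 r; rewrite ?andbF ?andbT //.
    subst; by move: ne; rewrite /p0 leqnn eqxx.
  have [e1|n1] := eqVneq i1 r; have [e2|n2] := eqVneq j1 c;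
  have [e3|n3] := eqVneq i1 c; have [e4|n4] := eqVneq j1 r;
    rewrite ?andbF ?andbT ?addr0 ?add0r ?mulr0 //; subst.
  all: try by (move: ne; rewrite /p0 rc eqxx).
  all: try by case: nrc.
  all: move: ne; rewrite /p0; case: (leqP c r) => h; last by rewrite eqxx.
  all: by case: nrc; apply: val_inj; apply/eqP; rewrite eqn_leq rc h. }
rewrite (bigD1 p0) //= big1 ?addr0; last first.
  by move=> rc /andP[h1 h2]; rewrite claim // mul0r.
rewrite /p0; case: (ltngtP i1 j1) => h.
- have nij : (i1 == j1 :> 'I_k) = false := ltn_eqF h.
  rewrite /Eo /= nij !mxE !eqxx /= (eq_sym j1) nij /=.
  rewrite addr0 mulr1 mulrA sqrt2h.
  congr (_ * (_ + _)); first by rewrite (eq_sym i2) (eq_sym j2).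
  by rewrite (eq_sym i2) (eq_sym j2) andbC.
- have nij : (j1 == i1 :> 'I_k) = false := ltn_eqF h.
  rewrite /Eo /= nij !mxE !eqxx /= (eq_sym i1) nij /=.
  rewrite add0r mulr1 mulrA sqrt2h addrC.
  congr (_ * (_ + _)); first by rewrite (eq_sym i2) (eq_sym j2).
  by rewrite (eq_sym i2) (eq_sym j2) andbC.
- have e : j1 = i1 by apply: val_inj.
  subst j1; rewrite /Eo /= eqxx !mxE !eqxx /= mul1r.
  rewrite [in X in _ + X]andbC (eq_sym i2) (eq_sym j2).
  set x := (_ %:R); lra.
Qed.
End F3.

Section Mx.
Variable R : realType.
Variable k : nat.
Local Notation W := (Wmx R k).

Definition sig (s : 'I_(k * k)) : 'I_(k * k) :=
  mxtens_index ((mxtens_unindex s).2, (mxtens_unindex s).1).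

Lemma sigE i j : sig (mxtens_index (i, j)) = mxtens_index (j, i).
Proof. by rewrite /sig mxtens_indexK. Qed.

Lemma sigK : involutive sig.
Proof. by move=> s; case: (mxtens_indexP s) => a b; rewrite !sigE. Qed.

Definition Tm : 'M[R]_(k * k) := \matrix_(s, s') (s' == sig s)%:R.

Lemma Tm_mulmx n (M : 'M[R]_(k * k, n)) : Tm *m M = \matrix_(s, c) M (sig s) c.
Proof.
apply/matrixP => s c; rewrite !mxE (bigD1 (sig s)) //= mxE eqxx mul1r big1 ?addr0 //.
by move=> s' /negbTE ns; rewrite mxE ns mul0r.
Qed.

Lemma mulmx_Tm n (M : 'M[R]_(n, k * k)) : M *m Tm = \matrix_(c, s) M c (sig s).
Proof.
apply/matrixP => c s; rewrite !mxE (bigD1 (sig s)) //= mxE sigK eqxx mulr1 big1 ?addr0 //.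
move=> s' ns; rewrite mxE.
have -> : (s == sig s') = false.
  by apply/negbTE; apply: contra ns => /eqP ->; rewrite sigK.
by rewrite mulr0.
Qed.

Lemma trTm : Tm^T = Tm.
Proof.
apply/matrixP => s s'; rewrite !mxE.
by rewrite eq_sym (inv_eq sigK).
Qed.

Lemma WE (l : 'I_(tri k)) (s : 'I_(k * k)) :
  W l s = Emx R l (mxtens_unindex s).2 (mxtens_unindex s).1.
Proof. by rewrite /Wmx !mxE. Qed.

Lemma Emx_sym (l : 'I_(tri k)) i j : Emx R l i j = Emx R l j i.
Proof.
rewrite EmxE /Eo; case: (pair_of l) => [[r c]|]; rewrite ?mxE //=.
case: eqP => _; rewrite !mxE; first by rewrite andbC.
by rewrite [(j == r) && _]andbC [(j == c) && _]andbC addrC.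
Qed.

Lemma WtW : W^T *m W = 2^-1 *: (1%:M + Tm).
Proof.
apply/matrixP => s s'; rewrite !mxE.
rewrite (eq_bigr (fun l => W l s * W l s')); last by move=> l _; rewrite mxE.
under eq_bigr do rewrite !WE.
case: (mxtens_indexP s) => a b; case: (mxtens_indexP s') => a' b'.
rewrite !mxtens_indexK /= F3 sigE (can_eq (@mxtens_indexK k k)) (can_eq (@mxtens_indexK k k)) !xpair_eqE.
congr (_ * (_%:R + _%:R)); first by rewrite andbC.
by rewrite (eq_sym a') (eq_sym b').
Qed.

Lemma TmW : Tm *m W^T = W^T.
Proof.
rewrite Tm_mulmx; apply/matrixP => s l; rewrite !mxE.
case: (mxtens_indexP s) => a b; rewrite sigE !mxtens_indexK /=.
by rewrite Emx_sym.
Qed.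

Lemma WTm : W *m Tm = W.
Proof. by rewrite -[W]trmxK -trTm -trmx_mul TmW. Qed.

Lemma tens_Tm (A B : 'M[R]_k) : Tm *m (A *t B) = (B *t A) *m Tm.
Proof.
rewrite Tm_mulmx mulmx_Tm; apply/matrixP => s s'; rewrite !mxE.
case: (mxtens_indexP s) => a b; case: (mxtens_indexP s') => a' b'.
by rewrite !sigE !mxtens_indexK /= mulrC.
Qed.

Definition Pi := W^T *m W.

Lemma half2 n m (X : 'M[R]_(n, m)) : 2^-1 *: (X + X) = X.
Proof.
have -> : X + X = 2%:R *: X by rewrite scaler_nat mulr2n.
by rewrite scalerA mulVf ?pnatr_eq0 // scale1r.
Qed.

Lemma Pi_tens (A : 'M[R]_k) : Pi *m (A *t A) = (A *t A) *m Pi.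
Proof.
rewrite /Pi WtW -scalemxAl -scalemxAr mulmxDl mulmxDr mul1mx mulmx1.
by rewrite tens_Tm.
Qed.

Lemma Pi_Wt : Pi *m W^T = W^T.
Proof. by rewrite /Pi WtW -scalemxAl mulmxDl mul1mx TmW half2. Qed.

Lemma W_Pi : W *m Pi = W.
Proof. by rewrite /Pi WtW -scalemxAr mulmxDr mulmx1 WTm half2. Qed.

Lemma sum_tens n q (F : 'I_(n * q) -> R) :
  \sum_(u < n * q) F u = \sum_(a < n) \sum_(b < q) F (mxtens_index (a, b)).
Proof.
rewrite pair_big /=; apply: reindex => //=.
by exists (@mxtens_unindex n q) => i _; rewrite ?mxtens_indexK ?mxtens_unindexK //; case: i.
Qed.

Lemma tens_vec m n p q (A : 'M[R]_(m, n)) (B : 'M[R]_(p, q)) (X : 'M[R]_(q, n)) :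
  (A *t B) *m vecmx X = vecmx (B *m X *m A^T).
Proof.
apply/matrixP => s c; rewrite !mxE.
case: (mxtens_indexP s) => i j; rewrite mxtens_indexK /= sum_tens.
apply: eq_bigr => a _; rewrite !mxE mulr_suml; apply: eq_bigr => b _.
by rewrite !mxE !mxtens_indexK /=; ring.
Qed.

Lemma Tm_vec (X : 'M[R]_k) : Tm *m vecmx X = vecmx X^T.
Proof.
rewrite Tm_mulmx; apply/matrixP => s c; rewrite !mxE.
by case: (mxtens_indexP s) => a b; rewrite sigE !mxtens_indexK.
Qed.

Lemma Pi_vec (X : 'M[R]_k) : X^T = X -> Pi *m vecmx X = vecmx X.
Proof.
by move=> sX; rewrite /Pi WtW -scalemxAl mulmxDl mul1mx Tm_vec sX half2.
Qed.

End Mx.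

Section E.
Variable R : realType.
Variable k : nat.
Local Notation W := (Wmx R k).

Lemma E1 (S : 'M[R]_k) (a b : 'cV[R]_k) :
  skron_row (S *m a) (S *m b) = skron_row a b *m (skron S S)^T.
Proof.
rewrite /skron_row /skron -tensmx_mul trmx_mul.
rewrite !trmx_mul !trmxK trmx_tens.
rewrite -!mulmxA; congr (_ *m _).
rewrite trmx_tens [W^T *m (W *m _)]mulmxA -/(Pi R k) [Pi R k *m _]mulmxA Pi_tens -mulmxA Pi_Wt.
by [].
Qed.

Lemma E2 (S M N : 'M[R]_k) : N *m S = S *m M ->
  skron 1%:M N *m skron S S = skron S S *m skron 1%:M M.
Proof.
move=> NS; rewrite /skron.
rewrite -!mulmxA [W^T *m (W *m _)]mulmxA [W^T *m (W *m _)]mulmxA -/(Pi R k).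
rewrite [Pi R k *m (S *t S *m _)]mulmxA Pi_tens -mulmxA Pi_Wt.
rewrite [S *t S *m (Pi R k *m _)]mulmxA -Pi_tens -mulmxA [W *m (Pi R k *m _)]mulmxA W_Pi.
by rewrite [X in W *m X = _]mulmxA [X in _ = W *m X]mulmxA !tensmx_mul mul1mx mulmx1 NS.
Qed.

Lemma E3 (S P : 'M[R]_k) : S \in unitmx -> P^T = P ->
  (skron S S)^T *m svec ((invmx S)^T *m P *m invmx S) = svec P.
Proof.
move=> uS sP; rewrite /skron /svec !trmx_mul trmxK trmx_tens.
set tP := (invmx S)^T *m P *m invmx S.
have stP : tP^T = tP by rewrite /tP !trmx_mul trmxK sP mulmxA.
rewrite -!mulmxA [W^T *m (W *m _)]mulmxA -/(Pi R k) Pi_vec //.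
rewrite tens_vec trmxK /tP trmx_inv !mulmxA mulmxV ?unitmx_tr // mul1mx.
by rewrite -mulmxA mulVmx // mulmx1.
Qed.

End E.

Section Int.
Variable R : realType.
Local Notation mu := (@lebesgue_measure R).

Lemma int_sum (D : set R) (mD : measurable D) (I : Type) (s : seq I) (G : I -> R -> R) :
  (forall i, mu.-integrable D (EFin \o G i)) ->
  mu.-integrable D (EFin \o (fun x => \sum_(i <- s) G i x)) /\
  Rintegral mu D (fun x => \sum_(i <- s) G i x) = \sum_(i <- s) Rintegral mu D (G i).
Proof.
move=> HG; elim: s => [|i s [IH1 IH2]].
  have -> : (fun x => \sum_(i <- [::]) G i x) = fun _ => 0.
    by apply: funext => x; rewrite big_nil.
  split; first exact: integrable0.
  by rewrite Rintegral_cst // mul0r big_nil.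
have -> : (fun x => \sum_(j <- i :: s) G j x) = fun x => G i x + \sum_(j <- s) G j x.
  by apply: funext => x; rewrite big_cons.
split.
  have -> : EFin \o (fun x => G i x + \sum_(j <- s) G j x) =
     ((EFin \o G i) \+ (EFin \o (fun x => (\sum_(j <- s) G j x)%R)))%E.
    by apply: funext => x /=; rewrite EFinD.
  exact: integrableD.
by rewrite RintegralD // IH2 big_cons.
Qed.

Lemma int_mulmx (D : set R) (mD : measurable D) m n p
  (F : R -> 'M[R]_(m, n)) (C : 'M[R]_(n, p)) :
  (forall i j, mu.-integrable D (EFin \o (fun x => F x i j))) ->
  (forall i c, mu.-integrable D (EFin \o (fun x => (F x *m C) i c))) /\
  (forall i c, Rintegral mu D (fun x => (F x *m C) i c) =
     \sum_d Rintegral mu D (fun x => F x i d) * C d c).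
Proof.
move=> HF.
have key : forall i c, mu.-integrable D (EFin \o (fun x => \sum_d F x i d * C d c)) /\
  Rintegral mu D (fun x => \sum_d F x i d * C d c) =
  \sum_d Rintegral mu D (fun x => F x i d * C d c).
  move=> i c; apply: (@int_sum D mD _ _ (fun d x => F x i d * C d c)) => d.
  have := @integrableZr _ _ _ mu D mD (C d c) _ (HF i d).
  apply: eq_integrable => // x _ /=; by rewrite EFinM.
have eF : forall i c, (fun x => (F x *m C) i c) = (fun x => \sum_d F x i d * C d c).
  by move=> i c; apply: funext => x; rewrite mxE.
split => i c; rewrite eF; first exact: (key i c).1.
rewrite (key i c).2; apply: eq_bigr => d _.
by rewrite (@RintegralZr _ _ _ mu D _ _ mD (HF i d)).
Qed.

Lemma int_prod (D : set R) (mD : measurable D) (h1 h2 : R -> R) :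
  measurable_fun D h1 -> mu.-integrable D (fun x => (h1 x ^+ 2)%:E) ->
  measurable_fun D h2 -> mu.-integrable D (fun x => (h2 x ^+ 2)%:E) ->
  mu.-integrable D (EFin \o (fun x => h1 x * h2 x)).
Proof.
move=> m1 i1 m2 i2.
apply: (@le_integrable _ _ _ mu D mD _ _ _ _ (@integrableD _ _ _ mu D mD _ _ i1 i2)).
  apply/measurable_realfun.measurable_EFinP.
  exact: measurable_realfun.measurable_funM.
move=> x _ /=; rewrite lee_fin.
have h0 : 0 <= h1 x ^+ 2 + h2 x ^+ 2 by apply: addr_ge0; apply: sqr_ge0.
rewrite (ger0_norm h0) ler_norml; apply/andP; split; nra.
Qed.

End Int.

Section Fin.
Variable R : realType.
Local Notation mu := (@lebesgue_measure R).

Lemma Iint_S l k (t : 'I_l.+1 -> R) (S : 'M[R]_k) (a b : R -> 'cV[R]_k) :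
  (forall (r : 'I_l) (i j : 'I_k),
     mu.-integrable `[tprev t r, tnext t r] (EFin \o (fun x => a x i 0 * b x j 0))) ->
  Iint t (fun x => S *m a x) (fun x => S *m b x) = Iint t a b *m (skron S S)^T.
Proof.
move=> Hi; apply/matrixP => r c; rewrite mxE [RHS]mxE.
set D := `[tprev t r, tnext t r]%classic.
have mD : measurable D by exact: measurable_itv.
have -> : (fun x => skron_row (S *m a x) (S *m b x) 0 c) =
   (fun x => (skron_row (a x) (b x) *m (skron S S)^T) 0 c).
  by apply: funext => x; rewrite E1.
have HT : forall i s, mu.-integrable D (EFin \o (fun x => ((a x *t b x)^T) i s)).
  move=> i s; case: (mxtens_indexP s) => p q.
  have -> : (fun x => ((a x *t b x)^T) i (mxtens_index (p, q))) = fun x => a x p 0 * b x q 0.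
    apply: funext => x; rewrite !mxE mxtens_indexK /=.
    by congr (a x p _ * b x q _); apply: val_inj; rewrite /= ?divn1 ?modn1 //; case: i => -[].
  exact: Hi.
have [HS1 _] := @int_mulmx R D mD _ _ _ (fun x => (a x *t b x)^T) (Wmx R k)^T HT.
have [_ ->] := @int_mulmx R D mD _ _ _ (fun x => skron_row (a x) (b x)) (skron S S)^T HS1.
by apply: eq_bigr => d _; rewrite /Iint !mxE.
Qed.

Lemma delta_S l k (t : 'I_l.+1 -> R) (S : 'M[R]_k) (a : R -> 'cV[R]_k) :
  deltamx t (fun x => S *m a x) (fun x => S *m a x) = deltamx t a a *m (skron S S)^T.
Proof.
apply/matrixP => r c; rewrite mxE [RHS]mxE -mulmxDr -mulmxBr E1 mxE.
by apply: eq_bigr => d _; rewrite /Iint !mxE.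
Qed.

Lemma t_le l (t : 'I_l.+1 -> R) : (forall r : 'I_l, tprev t r < tnext t r) ->
  forall i j : 'I_l.+1, (i <= j)%N -> t i <= t j.
Proof.
move=> Ht i [j hj] /=; elim: j hj => [|j IH] hj hij.
  have -> : i = Ordinal hj by apply: val_inj; apply/eqP; rewrite /= -leqn0.
  by [].
case: (eqVneq (val i) j.+1) => [e|ne].
  by have -> : i = Ordinal hj by apply: val_inj.
have hj' : (j < l.+1)%N by apply: ltnW.
have hij' : (i <= j)%N by move: hij; rewrite leq_eqVlt (negbTE ne).
apply: le_trans (IH hj' hij') _.
have hjl : (j < l)%N by [].
have h := Ht (Ordinal hjl).
have e1 : widen_ord (leqnSn l) (Ordinal hjl) = Ordinal hj' by apply: val_inj.
have e2 : lift ord0 (Ordinal hjl) = Ordinal hj by apply: val_inj.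
by rewrite /tprev /tnext e1 e2 in h; apply: ltW.
Qed.

Lemma sub_itv l (t : 'I_l.+1 -> R) : (forall r : 'I_l, tprev t r < tnext t r) ->
  forall r : 'I_l, `[tprev t r, tnext t r] `<=` `[t ord0, t ord_max].
Proof.
move=> Ht r x /=; rewrite !in_itv /= => /andP[h1 h2]; apply/andP; split.
  by apply: le_trans h1; apply: t_le.
apply: le_trans h2 _; apply: t_le => //=.
Qed.

Lemma pair_int l (t : 'I_l.+1 -> R) (Ht : forall r : 'I_l, tprev t r < tnext t r)
  k (h1 h2 : R -> 'cV[R]_k) :
  sq_int (t ord0) (t ord_max) h1 -> sq_int (t ord0) (t ord_max) h2 ->
  forall (r : 'I_l) (i j : 'I_k),
     mu.-integrable `[tprev t r, tnext t r] (EFin \o (fun x => h1 x i 0 * h2 x j 0)).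
Proof.
move=> H1 H2 r i j.
have [m1 i1] := H1 i; have [m2 i2] := H2 j.
have P := @int_prod R _ (measurable_itv `[t ord0, t ord_max]) _ _ m1 i1 m2 i2.
have Q := @integrableS _ _ _ mu `[t ord0, t ord_max]%classic `[tprev t r, tnext t r]%classic _
   (measurable_itv _) (measurable_itv _) (@sub_itv l t Ht r) P.
exact: Q.
Qed.

Lemma sq_sub a b (N : nat) (nd : 'I_N -> nat) (x : R -> 'cV[R]_(\sum_(k < N) nd k)) j :
  sq_int a b x -> sq_int a b (fun tau => submxcol (x tau) j).
Proof.
move=> H i; have [m1 i1] := H (tagnat.Rank j i).
have e : forall tau, submxcol (x tau) j i 0 = x tau (tagnat.Rank j i) 0.
  by move=> tau; rewrite /submxcol /mxsub mxE.
rewrite /=.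
rewrite (_ : (fun tau => submxcol (x tau) j i 0) = (fun tau => x tau (tagnat.Rank j i) 0)); last first.
  by apply: funext => tau; rewrite e.
rewrite (_ : (fun tau => ((submxcol (x tau) j i 0) ^+ 2)%:E) = (fun tau => ((x tau (tagnat.Rank j i) 0) ^+ 2)%:E)); last first.
  by apply: funext => tau; rewrite e.
by split.
Qed.

End Fin.

Theorem theorem4
  (R : realType) (N : nat) (nd md : 'I_N -> nat)
  (* system  xdot = f(x) + g(x) u,  x in R^n (n = sum n_j),  u in R^m (m = sum m_j) *)
  (f : 'cV[R]_(\sum_(k < N) nd k) -> 'cV[R]_(\sum_(k < N) nd k))
  (g : 'cV[R]_(\sum_(k < N) nd k) -> 'M[R]_(\sum_(k < N) nd k, \sum_(k < N) md k))
  (Hf0 : f 0 = 0)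
  (Hlip : exists Kset : set 'cV[R]_(\sum_(k < N) nd k),
      compact Kset /\ nbhs (0 : 'cV[R]_(\sum_(k < N) nd k)) Kset /\
      exists L : R, forall y z, Kset y -> Kset z ->
        `|f y - f z| <= L * `|y - z| /\ `|g y - g z| <= L * `|y - z|)
  (* linearization (A, B) at the origin *)
  (A : 'M[R]_(\sum_(k < N) nd k)) (B : 'M[R]_(\sum_(k < N) nd k, \sum_(k < N) md k))
  (HA : differentiable f 0 /\ ('d f 0 = mulmx A :> (_ -> _)))
  (HB : B = g 0)
  (* loop j, cost matrices, controller *)
  (j : 'I_N) (Qj : 'M[R]_(nd j)) (Rj : 'M[R]_(md j))
  (HQ : psd Qj) (HR : posdef Rj)
  (K : 'M[R]_(md j, nd j))
  (HK : hurwitz (submxblock A j j - submxblock B j j *m K))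
  (* sample times *)
  (l : nat) (t : 'I_l.+1 -> R)
  (Ht : forall r : 'I_l, tprev t r < tnext t r)
  (* state-input trajectory on [t_0, t_l] *)
  (x : R -> 'cV[R]_(\sum_(k < N) nd k)) (u : R -> 'cV[R]_(\sum_(k < N) md k))
  (Hxc : {within `[t ord0, t ord_max]%classic, continuous x})
  (Hode : forall tau, t ord0 < tau < t ord_max ->
      is_derive tau 1 x (f (x tau) + g (x tau) *m u tau))
  (Hsx : sq_int (t ord0) (t ord_max) x)
  (Hsu : sq_int (t ord0) (t ord_max) u)
  (Hsgu : sq_int (t ord0) (t ord_max)
            (fun tau => submxcol (g (x tau)) j *m u tau))
  (Hsw : sq_int (t ord0) (t ord_max)
            (fun tau => submxcol (f (x tau)) j - submxblock A j j *m submxcol (x tau) j))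
  (* modulation S = diag(S_1, ..., S_N) *)
  (S : forall k : 'I_N, 'M[R]_(nd k)) (HS : forall k, S k \in unitmx)
  (P : 'M[R]_(nd j)) (HP : posdef P) :
  let Ajj := submxblock A j j in
  let Bjj := submxblock B j j in
  let Qij := Qj + K^T *m Rj *m K in
  (* dEIRL data *)
  let xj := fun tau => submxcol (x tau) j in
  let gu := fun tau => submxcol (g (x tau)) j *m u tau in
  let w := fun tau => submxcol (f (x tau)) j - Ajj *m xj tau in
  let Areg := dEIRL_A t xj gu w (Bjj *m K) in
  let breg := dEIRL_b t xj Qij in
  (* modulated quantities *)
  let Sf := mxdiag S in
  let Sj := S j in
  let tx := fun tau => Sf *m x tau in
  let txj := fun tau => Sj *m xj tau in
  let tf := fun z => Sj *m submxcol (f (invmx Sf *m z)) j in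
  let tg := fun z => Sj *m submxcol (g (invmx Sf *m z)) j in
  let tA := Sj *m Ajj *m invmx Sj in
  let tB := Sj *m Bjj in
  let tQ := (invmx Sj)^T *m Qj *m invmx Sj in
  let tK := K *m invmx Sj in
  let tQi := tQ + tK^T *m Rj *m tK in
  let tw := fun tau => tf (tx tau) - tA *m txj tau in
  let tgu := fun tau => tg (tx tau) *m u tau in
  let tAreg := dEIRL_A t txj tgu tw (tB *m tK) in
  let tbreg := dEIRL_b t txj tQi in
  let tP := (invmx Sj)^T *m P *m invmx Sj in
  (Areg *m svec P = breg <-> tAreg *m svec tP = tbreg) /\
  tAreg = Areg *m (skron Sj Sj)^T /\
  tbreg = breg.
Proof.
move=> Ajj Bjj Qij xj gu w Areg breg Sf Sj tx txj tf tg tA tB tQ tK tQi tw tgu tAreg tbreg tP.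
have uS : Sj \in unitmx := HS j.
pose Sinv := mxdiag (fun k => invmx (S k)).
have SfX : forall m (X : 'M[R]_(\sum_(k < N) nd k, m)), Sinv *m (Sf *m X) = X.
  move=> m X; rewrite -[X in Sf *m X]submxcolK /Sf mul_mxdiag_mxcol /Sinv mul_mxdiag_mxcol.
  rewrite -[RHS]submxcolK; apply: eq_mxcol => i.
  by rewrite mulmxA mulVmx ?mul1mx // HS.
have uSf : Sf \in unitmx.
  by case: (@mulmx1_unit _ _ Sinv Sf) => //; rewrite -[Sf]mulmx1 SfX.
have hSf : invmx Sf *m Sf = 1%:M by rewrite mulVmx.
have Htx : forall tau, invmx Sf *m tx tau = x tau.
  by move=> tau; rewrite /tx mulmxA hSf mul1mx.
have Htgu : tgu = (fun tau => Sj *m gu tau).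
  by apply: funext => tau; rewrite /tgu /tg Htx /gu mulmxA.
have Htw : tw = (fun tau => Sj *m w tau).
  apply: funext => tau; rewrite /tw /tf Htx /tA /txj /w mulmxBr.
  by rewrite !mulmxA -[Sj *m Ajj *m invmx Sj *m Sj]mulmxA mulVmx // mulmx1.
set Z := (skron Sj Sj)^T.
have sqx : sq_int (t ord0) (t ord_max) xj := @sq_sub R _ _ N nd x j Hsx.
have I1 := @pair_int R l t Ht _ _ _ sqx sqx.
have I2 := @pair_int R l t Ht _ _ _ sqx Hsgu.
have I3 := @pair_int R l t Ht _ _ _ sqx Hsw.
have EI1 : Iint t txj txj = Iint t xj xj *m Z by exact: Iint_S.
have EI2 : Iint t txj tgu = Iint t xj gu *m Z by rewrite Htgu; exact: Iint_S.
have EI3 : Iint t txj tw = Iint t xj w *m Z by rewrite Htw; exact: Iint_S.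
have ED : deltamx t txj txj = deltamx t xj xj *m Z by exact: delta_S.
have ESK : Z *m (skron 1%:M (tB *m tK))^T = (skron 1%:M (Bjj *m K))^T *m Z.
  rewrite /Z -!trmx_mul; congr (_^T); apply: E2.
  by rewrite /tB /tK -!mulmxA mulVmx // mulmx1.
have HtA : tAreg = Areg *m Z.
  rewrite /tAreg /Areg /dEIRL_A ED EI1 EI2 EI3 -mulmxA ESK.
  by rewrite mulmxBl -scalemxAl !mulmxDl !mulmxA.
have symQ : Qij^T = Qij.
  have [sQ _] := HQ; have [sR _] := HR.
  by rewrite /Qij linearD /= !trmx_mul trmxK sQ sR mulmxA.
have HtQ : tQi = (invmx Sj)^T *m Qij *m invmx Sj.
  rewrite /tQi /tQ /tK /Qij mulmxDr mulmxDl; congr (_ + _).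
  by rewrite trmx_mul !mulmxA.
have HtB : tbreg = breg.
  by rewrite /tbreg /breg /dEIRL_b EI1 HtQ -mulmxA E3.
split; last by split.
have [sP _] := HP.
by rewrite HtA HtB -mulmxA /tP E3.
Qed.
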